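(* Let $k\ge3$ be an integer, $c>1$ fixed, $\delta=1/c$, $\mathcal N$ a positive integer with $\mathcal N^{1/k}>2$, $\mathcal L=\log \mathcal N^{1/k}$, and $\kappa>0$ fixed. Define $$\mathcal J(z)=\int_2^{\mathcal N^{1/k}} \frac{\delta x^{\delta-1} e(zx^k)}{\log x}\,dx,\qquad \mathcal I(z)=\int_0^{\mathcal N^{1/k}} \delta x^{\delta-1}e(zx^k)\,dx.$$ Then for any nonzero $\beta \in \mathbb R$, $$\mathcal J (\beta) - \mathcal L^{-1} \mathcal I (\beta) \ll \frac{\mathcal N^{\delta/k}}{\mathcal L^{\kappa+2} } + \min\{ \mathcal N^{\delta/k}, |\beta |^{-\delta/k}\}\frac{\log \log \mathcal N}{\mathcal L^2}.$$
   Context: $e(x)=e^{2\pi i x}$. Implied constants may depend on $c,k,\kappa$. *)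

(* Defs.v *)
From Stdlib Require Import Reals.
From Coquelicot Require Import Coquelicot.
Open Scope R_scope.

Definition e_ (t : R) : C := (cos (2 * PI * t), sin (2 * PI * t)).

Definition integrand (delta : R) (k : nat) (z x : R) : C :=
  scal (delta * Rpower x (delta - 1)) (e_ (z * x ^ k)).

Definition Jint (delta : R) (k : nat) (X z : R) : C :=
  RInt (V := C_R_CompleteNormedModule)
    (fun x => scal (/ ln x) (integrand delta k z x)) 2 X.

(* I(z) = int_0^{N^{1/k}} delta x^{delta-1} e(z x^k) dx ; improper at 0 when delta < 1 *)
Definition Iint (delta : R) (k : nat) (X z : R) : C :=
  RInt_gen (V := C_R_CompleteNormedModule)
    (integrand delta k z) (at_right 0) (at_point X).

(* Main.v *)
Require Import Defs.
From Stdlib Require Import Reals Lra Lia.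
From Coquelicot Require Import Coquelicot.
Open Scope R_scope.

Lemma Rpower_derive y x : 0 < x -> is_derive (fun x => Rpower x y) x (y * Rpower x (y-1)).
Proof. intros. apply is_derive_Reals. now apply derivable_pt_lim_power. Qed.

Lemma Rpower_ex_derive y x : 0 < x -> ex_derive (fun x => Rpower x y) x.
Proof. intros. eexists. now apply Rpower_derive. Qed.

Lemma Rpower_cont y x : 0 < x -> continuous (fun x => Rpower x y) x.
Proof. intros. apply (ex_derive_continuous (fun x => Rpower x y)). now apply Rpower_ex_derive. Qed.

Lemma Rpower_pos x y : 0 < Rpower x y.
Proof. unfold Rpower. apply exp_pos. Qed.

Lemma int_pow (d a b : R) : 0 < a -> a <= b ->
  is_RInt (fun x => d * Rpower x (d-1)) a b (Rpower b d - Rpower a d).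
Proof.
  intros Ha Hab.
  apply (is_RInt_derive (fun x => Rpower x d)).
  - intros x Hx. rewrite Rmin_left in Hx by lra. apply Rpower_derive. lra.
  - intros x Hx. rewrite Rmin_left in Hx by lra.
    apply (ex_derive_continuous (fun x => d * Rpower x (d-1))). auto_derive. apply Rpower_ex_derive; lra.
Qed.

Lemma Cmod_scalR (r : R) (z : C) : Cmod (scal r z) = Rabs r * Cmod z.
Proof.
  rewrite <- Cmod_R, <- Cmod_mult. f_equal. destruct z as [a b].
  unfold Cmult. simpl. change (scal r (a,b)) with (r*a, r*b). f_equal; ring.
Qed.

Lemma normCR (z : C_R_NormedModule) : norm z = Cmod z.
Proof. destruct z as [a b]. unfold norm; simpl. unfold prod_norm, Cmod; simpl.
 unfold norm; simpl. unfold abs; simpl.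
 rewrite !Rmult_1_r, <- !Rabs_mult, !Rabs_pos_eq by apply Rle_0_sqr. reflexivity. Qed.

Lemma Cmp (x y : C_R_CompleteNormedModule) : minus (plus x y) y = x.
Proof. destruct x, y. apply injective_projections; simpl; unfold plus, opp, zero, minus; simpl; ring. Qed.
Lemma Cm0 (x : C_R_CompleteNormedModule) : minus x zero = x.
Proof. destruct x. apply injective_projections; simpl; unfold plus, opp, zero, minus; simpl; ring. Qed.
Lemma Cmm (x l : C_R_CompleteNormedModule) : l = Cminus x (minus x l).
Proof. destruct x, l. apply injective_projections; simpl; unfold plus, opp, zero, minus; simpl; ring. Qed.

Lemma improper_exist (f : R -> C_R_CompleteNormedModule) (b d : R) :
  0 < b -> 0 < d ->
  (forall x, 0 < x <= b -> continuous f x) ->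
  (forall x, 0 < x <= b -> Cmod (f x) <= d * Rpower x (d-1)) ->
  exists l : C, is_RInt_gen (V:=C_R_CompleteNormedModule) f (at_right 0) (at_point b) l
     /\ Cmod l <= Rpower b d.
Proof.
  intros Hb Hd Hc Hf.
  set (G := fun a => RInt (V:=C_R_CompleteNormedModule) f a b).
  assert (Hex : forall a a', 0 < a -> a <= a' -> a' <= b -> ex_RInt (V:=C_R_CompleteNormedModule) f a a').
  { intros. apply ex_RInt_continuous. intros z Hz. rewrite Rmin_left in Hz by lra.
    rewrite Rmax_right in Hz by lra. apply Hc; lra. }
  assert (Hdiff : forall a a', 0 < a -> a <= a' -> a' <= b ->
     Cmod (minus (G a) (G a')) <= Rpower a' d - Rpower a d).
  { intros a a' H1 H2 H3. unfold G.
    rewrite <- (RInt_Chasles (V:=C_R_CompleteNormedModule) f a a' b) by (apply Hex; lra).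
    replace (minus (plus (RInt f a a') (RInt f a' b)) (RInt f a' b)) with (RInt (V:=C_R_CompleteNormedModule) f a a')
      by (symmetry; apply Cmp).
    rewrite <- normCR.
    apply (norm_RInt_le (V:=C_R_NormedModule) f (fun x => d * Rpower x (d-1)) a a'); auto.
    - intros x Hx. rewrite normCR; apply Hf; lra.
    - apply (RInt_correct (V:=C_R_CompleteNormedModule)), Hex; lra.
    - apply int_pow; lra. }
  set (Fl := filtermap G (at_right 0)).
  assert (HP : ProperFilter Fl).
  { apply filtermap_proper_filter. apply at_right_proper_filter. }
  assert (Hcau : cauchy Fl).
  { intros eps. set (a0 := Rmin b (Rpower (eps/2) (/d))).
    assert (Ha0 : 0 < a0) by (apply Rmin_glb_lt; [lra| apply Rpower_pos]).
    assert (Ha0d : Rpower a0 d <= eps/2).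
    { apply Rle_trans with (Rpower (Rpower (eps/2) (/d)) d).
      apply Rle_Rpower_l; [lra| split; [lra| apply Rmin_r]].
      rewrite Rpower_mult, Rinv_l, Rpower_1 by (pose proof (cond_pos eps); lra). lra. }
    exists (G a0). unfold Fl, filtermap. exists (mkposreal a0 Ha0). intros y Hy Hy0.
    unfold ball in Hy; simpl in Hy; unfold AbsRing_ball in Hy.
    change (abs (minus y 0)) with (Rabs (y - 0)) in Hy.
    rewrite Rminus_0_r, Rabs_pos_eq in Hy by lra.
    apply (@norm_compat1 R_AbsRing C_R_NormedModule).
    assert (a0 <= b) by apply Rmin_l.
    pose proof (Hdiff y a0 Hy0 ltac:(lra) ltac:(lra)) as HD.
    pose proof (Rpower_pos y d).
    rewrite normCR.
    pose proof (cond_pos eps). eapply Rle_lt_trans; [apply HD|]. lra. }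
  set (l := lim Fl).
  pose proof (complete_cauchy Fl HP Hcau) as Hl.
  exists l. split.
  - intros P [eps HPe].
    specialize (Hl eps).
    apply Filter_prod with (Q := fun a => 0 < a < b /\ ball l eps (G a)) (R := fun y => y = b).
    + apply filter_and; [ |exact Hl]. exists (mkposreal b Hb). intros y Hy Hy0.
      unfold ball in Hy; simpl in Hy; unfold AbsRing_ball in Hy.
      change (abs (minus y 0)) with (Rabs (y - 0)) in Hy.
      rewrite Rminus_0_r, Rabs_pos_eq in Hy by lra. lra.
    + reflexivity.
    + intros x y [Hx1 Hx2] ->. exists (G x). split.
      * simpl. apply (RInt_correct (V:=C_R_CompleteNormedModule)), Hex; lra.
      * apply HPe. exact Hx2.
  - apply Rle_plus_epsilon. intros e He.
    assert (Hnf := @norm_factor_gt_0 R_AbsRing C_R_NormedModule).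
    assert (He' : 0 < e / norm_factor (V:=C_R_NormedModule)) by (apply Rdiv_lt_0_compat; auto).
    specialize (Hl (mkposreal _ He')).
    assert (Hr : at_right 0 (fun a => 0 < a < b)).
    { exists (mkposreal b Hb). intros y Hy Hy0.
      unfold ball in Hy; simpl in Hy; unfold AbsRing_ball in Hy.
      change (abs (minus y 0)) with (Rabs (y - 0)) in Hy.
      rewrite Rminus_0_r, Rabs_pos_eq in Hy by lra. lra. }
    destruct (Hierarchy.filter_ex _ (filter_and _ _ Hr Hl)) as [a [Ha Hba]].
    apply (@norm_compat2 R_AbsRing C_R_NormedModule) in Hba. simpl in Hba.
    replace (norm_factor * (e / norm_factor)) with e in Hba by (field; lra).
    pose proof (Hdiff a b ltac:(lra) ltac:(lra) ltac:(lra)) as H1.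
    assert (HGb : G b = zero) by (unfold G; apply RInt_point).
    rewrite HGb in H1.
    rewrite Cm0 in H1.
    pose proof (Rpower_pos a d).
    rewrite normCR in Hba.
    rewrite (Cmm (G a) l).
    eapply Rle_trans. apply Cmod_triangle. rewrite Cmod_opp. apply Rplus_le_compat; [eapply Rle_trans; [apply H1|]; lra | apply Rlt_le; apply Hba].
Qed.

Lemma ibp_bound (phi phi' S S' : R -> R) (a b : R) :
  a <= b ->
  (forall x, a <= x <= b -> is_derive phi x (phi' x)) ->
  (forall x, a <= x <= b -> continuous phi' x) ->
  (forall x, a <= x <= b -> is_derive S x (S' x)) ->
  (forall x, a <= x <= b -> continuous S' x) ->
  (forall x, a <= x <= b -> phi' x <= 0) ->
  (forall x, a <= x <= b -> 0 <= phi x) ->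
  (forall x, a <= x <= b -> Rabs (S x) <= 1) ->
  Rabs (RInt (fun x => phi x * S' x) a b) <= 2 * phi a.
Proof.
  intros Hab Hp Hpc HS HSc Hneg Hpos Hbd.
  assert (HcS : forall x, a <= x <= b -> continuous S x).
  { intros x Hx. apply (ex_derive_continuous S). eexists; now apply HS. }
  assert (Hl : is_RInt (fun t => phi' t * S t) a b (RInt (fun t => phi' t * S t) a b)).
  { apply (RInt_correct (V:=R_CompleteNormedModule)). apply (ex_RInt_continuous (V:=R_CompleteNormedModule)).
    rewrite Rmin_left, Rmax_right by lra. intros z Hz.
    apply (continuous_mult phi' S); auto. }
  pose proof (is_RInt_scal_derive_r (V:=R_CompleteNormedModule) phi S phi' S' a b _
     ltac:(rewrite Rmin_left, Rmax_right by lra; auto)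
     ltac:(rewrite Rmin_left, Rmax_right by lra; auto)
     ltac:(rewrite Rmin_left, Rmax_right by lra; auto)
     ltac:(rewrite Rmin_left, Rmax_right by lra; auto) Hl) as H.
  apply is_RInt_unique in H.
  change (RInt (fun t => scal (phi t) (S' t)) a b) with (RInt (fun x => phi x * S' x) a b) in H.
  rewrite H.
  set (l := RInt (fun t => phi' t * S t) a b) in *.
  assert (Hlb : Rabs l <= phi a - phi b).
  { assert (Hg : is_RInt (fun t => - phi' t) a b (phi a - phi b)).
    { replace (phi a - phi b) with (minus ((fun t => - phi t) b) ((fun t => - phi t) a))
        by (unfold minus, plus, opp; simpl; ring).
      apply (is_RInt_derive (V:=R_CompleteNormedModule) (fun t => - phi t)).
      - rewrite Rmin_left, Rmax_right by lra. intros x Hx. apply (is_derive_opp phi). auto.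
      - rewrite Rmin_left, Rmax_right by lra. intros x Hx. apply (continuous_opp phi'). auto. }
    apply (norm_RInt_le (V:=R_NormedModule) (fun t => phi' t * S t) (fun t => - phi' t) a b); auto.
    intros x Hx. change (norm (phi' x * S x)) with (Rabs (phi' x * S x)).
    rewrite Rabs_mult. specialize (Hbd x Hx). specialize (Hneg x Hx).
    rewrite (Rabs_left1 (phi' x)) by auto. 
    pose proof (Rabs_pos (S x)). nra. }
  change (minus (minus (scal (phi b) (S b)) (scal (phi a) (S a))) l) with
    (phi b * S b - phi a * S a - l).
  assert (Hab' : a <= a <= b) by lra. assert (Hbb : a <= b <= b) by lra.
  pose proof (Hbd a Hab'). pose proof (Hbd b Hbb). pose proof (Hpos a Hab'). pose proof (Hpos b Hbb).
  assert (Rabs (phi b * S b) <= phi b).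
  { rewrite Rabs_mult, Rabs_pos_eq by lra. nra. }
  assert (Rabs (phi a * S a) <= phi a).
  { rewrite Rabs_mult, Rabs_pos_eq by lra. nra. }
  unfold Rminus. eapply Rle_trans. apply Rabs_triang. rewrite Rabs_Ropp.
  eapply Rle_trans. apply Rplus_le_compat_r. apply Rabs_triang. rewrite Rabs_Ropp. lra.
Qed.

Definition gL (L x : R) := / ln x - / L.
Definition wL (d L x : R) := d * Rpower x (d-1) * gL L x.
Definition phiL (d : R) (k : nat) (L x : R) := d / INR k * Rpower x (d - INR k) * gL L x.
Definition phiL' (d : R) (k : nat) (L x : R) :=
  d / INR k * ((d - INR k) * Rpower x (d - INR k - 1) * gL L x
               + Rpower x (d - INR k) * (- (/ x) / (ln x * ln x))).

Lemma ln_pos' x : 1 < x -> 0 < ln x.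
Proof. intros. rewrite <- ln_1. apply ln_increasing; lra. Qed.

Lemma wL_cont d L x : 1 < x -> continuous (wL d L) x.
Proof.
  intros Hx. apply (ex_derive_continuous (wL d L)). unfold wL, gL.
  pose proof (ln_pos' x Hx).
  auto_derive. repeat split; try lra. apply Rpower_ex_derive; lra.
Qed.

Lemma phiL_derive d k L x : 1 < x -> is_derive (phiL d k L) x (phiL' d k L x).
Proof.
  intros Hx. pose proof (ln_pos' x Hx). unfold phiL, phiL', gL.
  auto_derive.
  - repeat split; try lra. apply Rpower_ex_derive; lra.
    replace (Derive (fun x : R => Rpower x (d - INR k)) x) with ((d - INR k) * Rpower x (d - INR k - 1)) by (symmetry; apply is_derive_unique; apply Rpower_derive; lra).
    unfold Rdiv, Rminus; ring.
Qed.

Lemma phiL'_cont d k L x : 1 < x -> continuous (phiL' d k L) x.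
Proof.
  intros Hx. pose proof (ln_pos' x Hx).
  apply (ex_derive_continuous (phiL' d k L)). unfold phiL', gL.
  auto_derive. repeat split; try lra; try (apply Rpower_ex_derive; lra); nra.
Qed.

Lemma gL_nonneg L x : 1 < x -> ln x <= L -> 0 <= gL L x.
Proof.
  intros Hx HL. pose proof (ln_pos' x Hx). unfold gL.
  assert (/ L <= / ln x) by (apply Rinv_le_contravar; lra). lra.
Qed.

Lemma phiL'_neg d k L x : 0 < d -> d < INR k -> 1 < x -> ln x <= L -> phiL' d k L x <= 0.
Proof.
  intros Hd Hk Hx HL. pose proof (ln_pos' x Hx). pose proof (gL_nonneg L x Hx HL).
  unfold phiL'.
  pose proof (Rpower_pos x (d - INR k - 1)). pose proof (Rpower_pos x (d - INR k)).
  assert (0 < d / INR k) by (apply Rdiv_lt_0_compat; lra).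
  assert (0 < / x) by (apply Rinv_0_lt_compat; lra).
  assert (0 < / (ln x * ln x)) by (apply Rinv_0_lt_compat; nra).
  assert (HA : (d - INR k) * Rpower x (d - INR k - 1) * gL L x <= 0).
  { assert (0 <= Rpower x (d - INR k - 1) * gL L x) by nra. nra. }
  assert (HB : Rpower x (d - INR k) * (- / x / (ln x * ln x)) <= 0).
  { unfold Rdiv. assert (0 < / x * / (ln x * ln x)) by nra. nra. }
  set (A := (d - INR k) * Rpower x (d - INR k - 1) * gL L x) in *.
  set (B := Rpower x (d - INR k) * (- / x / (ln x * ln x))) in *.
  nra.
Qed.

Lemma phiL_nonneg d k L x : 0 < d -> (1 <= k)%nat -> 1 < x -> ln x <= L -> 0 <= phiL d k L x.
Proof.
  intros Hd Hk Hx HL. pose proof (gL_nonneg L x Hx HL). unfold phiL.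
  pose proof (Rpower_pos x (d - INR k)).
  assert (0 < INR k) by (apply lt_0_INR; lia).
  assert (0 < d / INR k) by (apply Rdiv_lt_0_compat; lra).
  apply Rmult_le_pos; [|lra]. nra.
Qed.

Lemma Rpower_dk d k x : (1 <= k)%nat -> 0 < x ->
  Rpower x (d - INR k) * x ^ (k-1) = Rpower x (d - 1).
Proof.
  intros Hk Hx. rewrite <- Rpower_pow by lra. rewrite <- Rpower_plus.
  rewrite minus_INR by lia. simpl. f_equal. ring.
Qed.

Lemma w_ident d k L beta t x : (1 <= k)%nat -> 0 < x -> beta <> 0 ->
  wL d L x * t = / (2 * PI * beta) * (phiL d k L x * (2 * PI * beta * INR k * x ^ (k-1) * t)).
Proof.
  intros Hk Hx Hb. unfold wL, phiL.
  rewrite <- (Rpower_dk d k x) by auto.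
  assert (0 < INR k) by (apply lt_0_INR; lia).
  pose proof PI_RGT_0.
  field. repeat split; lra.
Qed.

Lemma L_ibp d k L beta (S T : R -> R) a b :
  0 < d -> d < INR k -> (1 <= k)%nat -> beta <> 0 -> 1 < a -> a <= b -> ln b <= L ->
  (forall x, 0 < x -> is_derive S x (2*PI*beta*INR k * x^(k-1) * T x)) ->
  (forall x, 0 < x -> continuous T x) ->
  (forall x, Rabs (S x) <= 1) ->
  Rabs (RInt (fun x => wL d L x * T x) a b) <= 2 * phiL d k L a / (2 * PI * Rabs beta).
Proof.
  intros Hd Hdk Hk Hb Ha Hab HbL HS HT HSb.
  set (S' := fun x => 2*PI*beta*INR k * x^(k-1) * T x).
  assert (HS'c : forall x, 0 < x -> continuous S' x).
  { intros x Hx. apply (continuous_mult (fun x => 2*PI*beta*INR k * x^(k-1)) T); auto.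
    apply (ex_derive_continuous (fun x => 2*PI*beta*INR k * x^(k-1))). auto_derive. auto. }
  assert (Hln : forall x, a <= x <= b -> ln x <= L).
  { intros x Hx. apply Rle_trans with (ln b); auto. apply ln_le; lra. }
  assert (Hphic : forall x, 1 < x -> continuous (phiL d k L) x).
  { intros x Hx. apply (ex_derive_continuous (phiL d k L)). eexists. apply phiL_derive; auto. }
  rewrite (RInt_ext _ (fun x => scal (/(2*PI*beta)) (phiL d k L x * S' x))).
  2: { intros x Hx. rewrite Rmin_left, Rmax_right in Hx by lra. apply w_ident; auto; lra. }
  rewrite (RInt_scal (V:=R_CompleteNormedModule)).
  2: { apply (ex_RInt_continuous (V:=R_CompleteNormedModule)). rewrite Rmin_left, Rmax_right by lra.
       intros z Hz. apply (continuous_mult (phiL d k L) S'); [apply Hphic | apply HS'c]; lra. }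
  change (scal (/ (2 * PI * beta)) (RInt (fun x : R => phiL d k L x * S' x) a b))
    with (/ (2 * PI * beta) * RInt (fun x : R => phiL d k L x * S' x) a b).
  pose proof PI_RGT_0.
  assert (Habs : 0 < Rabs beta) by (apply Rabs_pos_lt; auto).
  rewrite Rabs_mult, Rabs_inv, !Rabs_mult, (Rabs_pos_eq 2), (Rabs_pos_eq PI) by lra.
  pose proof (ibp_bound (phiL d k L) (phiL' d k L) S S' a b Hab
    ltac:(intros; apply phiL_derive; lra)
    ltac:(intros; apply phiL'_cont; lra)
    ltac:(intros; apply HS; lra)
    ltac:(intros; apply HS'c; lra)
    ltac:(intros; apply phiL'_neg; auto; lra)
    ltac:(intros; apply phiL_nonneg; auto; lra)
    ltac:(intros; apply HSb)) as Hi.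
  unfold Rdiv. rewrite (Rmult_comm (2 * phiL d k L a)).
  apply Rmult_le_compat_l; [|exact Hi].
  left. apply Rinv_0_lt_compat. nra.
Qed.

Lemma L_triv d L (T : R -> R) gam a b :
  0 < d -> 1 < a -> a <= b ->
  (forall x, 0 < x -> continuous T x) ->
  (forall x, Rabs (T x) <= 1) ->
  (forall x, a <= x <= b -> Rabs (gL L x) <= gam) ->
  Rabs (RInt (fun x => wL d L x * T x) a b) <= gam * (Rpower b d - Rpower a d).
Proof.
  intros Hd Ha Hab HT HTb Hg.
  assert (Hc : forall x, 1 < x -> continuous (fun x => wL d L x * T x) x).
  { intros x Hx. apply (continuous_mult (wL d L) T); [apply wL_cont; auto | apply HT; lra]. }
  assert (Hi : is_RInt (fun x => gam * (d * Rpower x (d-1))) a b (gam * (Rpower b d - Rpower a d))).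
  { apply (is_RInt_scal (V:=R_CompleteNormedModule) (fun x => d * Rpower x (d-1))). apply int_pow; lra. }
  apply (norm_RInt_le (V:=R_NormedModule) (fun x => wL d L x * T x) (fun x => gam * (d * Rpower x (d-1))) a b _ _ Hab); [| |exact Hi].
  - intros x Hx. change (norm (wL d L x * T x)) with (Rabs (wL d L x * T x)).
    unfold wL. rewrite !Rabs_mult. 
    pose proof (Rpower_pos x (d-1)). rewrite (Rabs_pos_eq d), (Rabs_pos_eq (Rpower x (d-1))) by lra.
    specialize (Hg x Hx). specialize (HTb x). pose proof (Rabs_pos (gL L x)). pose proof (Rabs_pos (T x)).
    assert (Rabs (gL L x) * Rabs (T x) <= gam) by nra.
    assert (0 < d * Rpower x (d-1)) by nra. nra.
  - apply (RInt_correct (V:=R_CompleteNormedModule)). apply (ex_RInt_continuous (V:=R_CompleteNormedModule)).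
    rewrite Rmin_left, Rmax_right by lra. intros z Hz. apply Hc. lra.
Qed.

Lemma ln_lt_self x : 0 < x -> ln x < x.
Proof.
  intros Hx. rewrite <- (ln_exp x) at 2. apply ln_increasing; auto.
  pose proof (exp_ineq1 x ltac:(lra)). lra.
Qed.

Lemma ln_le_2sqrt x : 0 < x -> ln x <= 2 * sqrt x.
Proof.
  intros Hx. pose proof (sqrt_lt_R0 x Hx).
  rewrite <- (sqrt_sqrt x) at 1 by lra. rewrite ln_mult by lra.
  pose proof (ln_lt_self (sqrt x) H). lra.
Qed.

Lemma mlnL m L : 0 < m -> 16 * m^2 <= L -> m * ln L <= L / 2.
Proof.
  intros Hm HL. assert (HL0 : 0 < L) by nra.
  pose proof (ln_le_2sqrt L HL0).
  assert (4 * m <= sqrt L).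
  { rewrite <- (sqrt_pow2 (4*m)) by lra. apply sqrt_le_1_alt. nra. }
  pose proof (sqrt_sqrt L ltac:(lra)).
  nra.
Qed.

Lemma Rpower_exp x y : Rpower x y = exp (y * ln x).
Proof. reflexivity. Qed.

Lemma ln2_lt1 : ln 2 < 1.
Proof. rewrite <- ln_exp with 1. apply ln_increasing; [lra|]. pose proof (exp_ineq1 1 ltac:(lra)). lra. Qed.

Lemma ln2_pos : 0 < ln 2.
Proof. apply ln_pos'; lra. Qed.

Lemma wT_exRInt d L (T : R -> R) a b : 1 < a -> a <= b -> (forall x, 0 < x -> continuous T x) ->
  ex_RInt (fun x => wL d L x * T x) a b.
Proof.
  intros Ha Hab HT. apply (ex_RInt_continuous (V:=R_CompleteNormedModule)).
  rewrite Rmin_left, Rmax_right by lra. intros z Hz.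
  apply (continuous_mult (wL d L) T); [apply wL_cont| apply HT]; lra.
Qed.

Lemma gL_le_inv2 L x : 2 <= x -> ln x <= L -> Rabs (gL L x) <= / ln 2.
Proof.
  intros Hx HL. pose proof (gL_nonneg L x ltac:(lra) HL).
  rewrite Rabs_pos_eq by auto. unfold gL.
  pose proof ln2_pos. pose proof (ln_le 2 x ltac:(lra) Hx).
  assert (/ ln x <= / ln 2) by (apply Rinv_le_contravar; lra).
  assert (0 < / L) by (apply Rinv_0_lt_compat; lra). lra.
Qed.

Lemma Rpower_le_neg x y e : 0 < x <= y -> e <= 0 -> Rpower y e <= Rpower x e.
Proof.
  intros Hxy He. rewrite !Rpower_exp.
  assert (ln x <= ln y) by (apply ln_le; lra).
  assert (e * ln y <= e * ln x) by nra.
  destruct (Req_dec (e * ln y) (e * ln x)) as [Heq|Hne].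
  - rewrite Heq. lra.
  - left. apply exp_increasing. lra.
Qed.

Lemma real_est d k beta X (S T : R -> R) m lam :
  0 < d < 1 -> (3 <= k)%nat -> beta <> 0 -> 2 < X -> 2 < m ->
  ln (ln X) <= lam -> 0 <= lam ->
  (forall x, 0 < x -> is_derive S x (2*PI*beta*INR k * x^(k-1) * T x)) ->
  (forall x, 0 < x -> continuous T x) ->
  (forall x, Rabs (S x) <= 1) -> (forall x, Rabs (T x) <= 1) ->
  Rabs (RInt (fun x => wL d (ln X) x * T x) 2 X) <=
    (Rpower (16*m^2) (m*d) + 1) / ln 2 * (Rpower X d / Rpower (ln X) (m*d))
    + 4 * m * Rmin (Rpower X d) (Rpower (Rpower (Rabs beta) (- / INR k)) d) * lam / (ln X)^2.
Proof.
  intros Hd Hk Hb HX Hm Hlam Hlam0 HS HT HSb HTb.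
  set (L := ln X) in *.
  pose proof ln2_pos as Hl2. pose proof ln2_lt1.
  assert (HLl2 : ln 2 < L) by (apply ln_increasing; lra).
  assert (HL0 : 0 < L) by lra.
  set (Tb := Rpower (Rabs beta) (- / INR k)).
  assert (HTb0 : 0 < Tb) by apply Rpower_pos.
  assert (Hmin0 : 0 <= Rmin (Rpower X d) (Rpower Tb d)).
  { apply Rmin_glb; left; apply Rpower_pos. }
  assert (HXd : 0 < Rpower X d) by apply Rpower_pos.
  assert (HLmd : 0 < Rpower L (m*d)) by apply Rpower_pos.
  set (A := (Rpower (16*m^2) (m*d) + 1) / ln 2).
  set (P1 := Rpower X d / Rpower L (m*d)).
  assert (HP1 : 0 < P1) by (apply Rdiv_lt_0_compat; auto).
  assert (HL2 : 0 < L^2) by nra.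
  assert (Hsec : 0 <= 4 * m * Rmin (Rpower X d) (Rpower Tb d) * lam / L ^ 2).
  { apply Rmult_le_pos; [|left; apply Rinv_0_lt_compat; auto].
    apply Rmult_le_pos; auto. apply Rmult_le_pos; auto. lra. }
  assert (Hln : forall x, 2 <= x <= X -> ln x <= L).
  { intros x Hx. apply ln_le; lra. }
  destruct (Rle_lt_dec L (16 * m^2)) as [Hsmall | Hbig].
  -
    eapply Rle_trans.
    { apply (L_triv d L T (/ ln 2) 2 X); try lra; auto.
      intros x Hx. apply gL_le_inv2; try lra. apply Hln; lra. }
    assert (Rpower X d - Rpower 2 d <= Rpower X d) by (pose proof (Rpower_pos 2 d); lra).
    assert (HLm : Rpower L (m*d) <= Rpower (16*m^2) (m*d)).
    { apply Rle_Rpower_l; [nra| lra]. }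
    assert (Rpower X d = P1 * Rpower L (m*d)) by (unfold P1; field; lra).
    assert (/ ln 2 * Rpower X d <= A * P1).
    { unfold A. rewrite H1.
      assert (0 < / ln 2) by (apply Rinv_0_lt_compat; lra).
      replace (/ ln 2 * (P1 * Rpower L (m * d))) with (/ ln 2 * P1 * Rpower L (m * d)) by ring.
      replace ((Rpower (16 * m ^ 2) (m * d) + 1) / ln 2 * P1) with (/ ln 2 * P1 * (Rpower (16 * m ^ 2) (m * d) + 1)) by (field; lra).
      apply Rmult_le_compat_l; [nra| lra]. }
    assert (0 < / ln 2) by (apply Rinv_0_lt_compat; lra).
    nra.
  -
    assert (Hm0 : 0 < m) by lra.
    pose proof (mlnL m L Hm0 (Rlt_le _ _ Hbig)) as HmL.
    assert (HL1 : 1 < L) by nra.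
    assert (HlnL : 0 < ln L) by (apply ln_pos'; lra).
    assert (HXe : X = exp L) by (unfold L; rewrite exp_ln; lra).
    set (Y := exp (L - m * ln L)).
    assert (HlnY : ln Y = L - m * ln L) by (unfold Y; apply ln_exp).
    assert (HY2 : 2 < Y).
    { unfold Y. rewrite <- (exp_ln 2) by lra. apply exp_increasing. nra. }
    assert (HYX : Y <= X).
    { rewrite HXe. unfold Y. left. apply exp_increasing. nra. }
    rewrite <- (RInt_Chasles (V:=R_CompleteNormedModule) _ 2 Y X) by (apply wT_exRInt; auto; lra).
    change (plus ?a ?b) with (a + b).
    eapply Rle_trans. apply Rabs_triang.
    apply Rplus_le_compat.
    + eapply Rle_trans.
      { apply (L_triv d L T (/ ln 2) 2 Y); try lra; auto.
        intros x Hx. apply gL_le_inv2; try lra. apply Hln; lra. }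
      assert (HYd : Rpower Y d = P1).
      { unfold P1. rewrite !Rpower_exp, HlnY. fold L.
        replace (d * (L - m * ln L)) with (d * L + - (m * d * ln L)) by ring.
        rewrite exp_plus, exp_Ropp. unfold Rdiv. reflexivity. }
      pose proof (Rpower_pos 2 d).
      assert (HA : / ln 2 <= A).
      { unfold A. unfold Rdiv. pose proof (Rpower_pos (16 * m ^ 2) (m * d)).
        assert (0 < / ln 2) by (apply Rinv_0_lt_compat; lra). nra. }
      assert (0 < / ln 2) by (apply Rinv_0_lt_compat; lra).
      rewrite HYd. nra.
    + set (gam := 2 * m * lam / L ^ 2).
      assert (Hgam0 : 0 <= gam) by (unfold gam; apply Rmult_le_pos; [nra | left; apply Rinv_0_lt_compat; auto]).
      assert (HgY : forall x, Y <= x <= X -> Rabs (gL L x) <= gam).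
      { intros x Hx.
        assert (Hux : ln Y <= ln x) by (apply ln_le; lra).
        assert (HxL : ln x <= L) by (apply Hln; lra).
        set (u := ln x) in *.
        assert (Hu0 : 0 < u) by lra.
        rewrite Rabs_pos_eq by (apply gL_nonneg; [lra| exact HxL]).
        assert (H1 : L - u <= m * lam) by (assert (m * ln L <= m * lam) by nra; lra).
        assert (H2 : L <= 2 * u) by lra.
        assert (H3 : L * (L - u) <= L * (m * lam)) by (apply Rmult_le_compat_l; lra).
        assert (H4 : L * (m * lam) <= 2 * u * (m * lam)) by (apply Rmult_le_compat_r; nra).
        assert (Hkey : L*L - u*L <= 2*m*lam*u) by nra.
        unfold gL, gam. fold u.
        replace (/ u - / L) with ((L*L - u*L) * / (u*L*L)) by (field; lra).
        replace (2 * m * lam / L ^ 2) with ((2*m*lam*u) * / (u*L*L)) by (field; lra).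
        apply Rmult_le_compat_r; [left; apply Rinv_0_lt_compat; nra| lra]. }
      assert (HPI := PI2_3_2).
      assert (Hbeta : 0 < Rabs beta) by (apply Rabs_pos_lt; auto).
      assert (Hk3 : 3 <= INR k) by (replace 3 with (INR 3) by (simpl; ring); apply le_INR; lia).
      assert (HTbk : Rpower Tb (d - INR k) = Rpower Tb d * Rabs beta).
      { unfold Rminus. rewrite Rpower_plus. f_equal. unfold Tb. rewrite Rpower_mult.
        replace (- / INR k * - INR k) with 1 by (field; lra). apply Rpower_1; auto. }
      assert (Hphi : forall a, Tb <= a -> Y <= a <= X ->
                2 * phiL d k L a / (2 * PI * Rabs beta) <= gam * Rpower Tb d).
      { intros a Ha1 Ha2.
        pose proof (HgY a Ha2) as Hga. rewrite Rabs_pos_eq in Hga by (apply gL_nonneg; try lra; apply Hln; lra).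
        pose proof (gL_nonneg L a ltac:(lra) ltac:(apply Hln; lra)).
        assert (Hpa : Rpower a (d - INR k) <= Rpower Tb (d - INR k)) by (apply Rpower_le_neg; lra).
        pose proof (Rpower_pos a (d - INR k)).
        assert (Hdk : 0 < d / INR k <= 1).
        { split. apply Rdiv_lt_0_compat; lra. apply Rmult_le_reg_r with (INR k); [lra|].
          unfold Rdiv. rewrite Rmult_assoc, Rinv_l by lra. lra. }
        unfold phiL.
        assert (Hph : d / INR k * Rpower a (d - INR k) * gL L a <= Rpower Tb d * Rabs beta * gam).
        { rewrite <- HTbk. 
          assert (Rpower a (d - INR k) * gL L a <= Rpower Tb (d - INR k) * gam).
          { apply Rmult_le_compat; lra. }
          assert (0 <= Rpower a (d - INR k) * gL L a) by nra. nra. }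
        assert (Hpos : 0 < 2 * PI * Rabs beta) by nra.
        apply Rmult_le_reg_r with (2 * PI * Rabs beta); auto.
        unfold Rdiv. rewrite Rmult_assoc, Rinv_l by lra.
        pose proof (Rpower_pos Tb d). assert (0 <= Rpower Tb d * Rabs beta * gam) by (apply Rmult_le_pos; nra). nra. }
      assert (Hd1 : d < INR k) by lra.
      destruct (Rle_lt_dec X Tb) as [HTX | HTX].
      * rewrite Rmin_left by (apply Rle_Rpower_l; lra).
        eapply Rle_trans.
        { apply (L_triv d L T gam Y X); try lra; auto. }
        pose proof (Rpower_pos Y d).
        assert (gam * (Rpower X d - Rpower Y d) <= gam * Rpower X d) by nra.
        unfold gam in *. unfold Rdiv in *. nra.
      * rewrite Rmin_right by (left; apply Rlt_Rpower_l; lra).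
        assert (Hmain : Rabs (RInt (fun x => wL d L x * T x) Y X) <= 2 * gam * Rpower Tb d).
        { destruct (Rle_lt_dec Tb Y) as [HTY | HTY].
          - eapply Rle_trans.
            { apply (L_ibp d k L beta S T Y X); auto; try lra; try lia; apply Rle_refl. }
            pose proof (Hphi Y HTY ltac:(lra)). pose proof (Rpower_pos Tb d). nra.
          - rewrite <- (RInt_Chasles (V:=R_CompleteNormedModule) _ Y Tb X) by (apply wT_exRInt; auto; lra).
            change (plus ?a ?b) with (a + b).
            eapply Rle_trans. apply Rabs_triang.
            assert (Rabs (RInt (fun x => wL d L x * T x) Y Tb) <= gam * Rpower Tb d).
            { eapply Rle_trans.
              { apply (L_triv d L T gam Y Tb); try lra; auto. intros x Hx. apply HgY. lra. }
              pose proof (Rpower_pos Y d). nra. }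
            assert (Rabs (RInt (fun x => wL d L x * T x) Tb X) <= gam * Rpower Tb d).
            { eapply Rle_trans.
              { apply (L_ibp d k L beta S T Tb X); auto; try lra; try lia; apply Rle_refl. }
              apply Hphi; lra. }
            lra. }
        eapply Rle_trans. exact Hmain.
        unfold gam. unfold Rdiv. right. ring.
Qed.

Lemma continuous_pairC (f g : R -> R) x : continuous f x -> continuous g x ->
  continuous (fun y => ((f y, g y) : C_R_CompleteNormedModule)) x.
Proof.
  intros Hf Hg P [eps HP]. change (locally x (fun y => P (f y, g y))).
  apply (filter_imp (fun y => ball (f x) eps (f y) /\ ball (g x) eps (g y))).
  - intros y [H1 H2]. apply HP. split; assumption.
  - apply filter_and; [apply Hf | apply Hg]; apply locally_ball.
Qed.

Lemma Cmod_e t : Cmod (e_ t) = 1.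
Proof.
  unfold e_, Cmod; simpl. rewrite !Rmult_1_r.
  rewrite <- (sqrt_1). f_equal. pose proof (sin2_cos2 (2*PI*t)). unfold Rsqr in H. lra.
Qed.

Lemma Cmod_le_sum (z : C) : Cmod z <= Rabs (fst z) + Rabs (snd z).
Proof.
  destruct z as [a b]. unfold Cmod; simpl.
  rewrite <- (sqrt_pow2 (Rabs a + Rabs b)) by (pose proof (Rabs_pos a); pose proof (Rabs_pos b); lra).
  apply sqrt_le_1_alt.
  pose proof (Rabs_pos a); pose proof (Rabs_pos b).
  assert (a * (a*1) = Rabs a * Rabs a) by (rewrite <- Rabs_mult, Rabs_pos_eq by nra; ring).
  assert (b * (b*1) = Rabs b * Rabs b) by (rewrite <- Rabs_mult, Rabs_pos_eq by nra; ring).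
  nra.
Qed.

Lemma RInt_fst (f : R -> C_R_CompleteNormedModule) a b : ex_RInt f a b ->
  fst (RInt f a b) = RInt (fun x => fst (f x)) a b.
Proof.
  intros H. symmetry. apply is_RInt_unique.
  apply (is_RInt_fct_extend_fst (U:=R_NormedModule) (V:=R_NormedModule)).
  apply (RInt_correct (V:=C_R_CompleteNormedModule)). exact H.
Qed.

Lemma RInt_snd (f : R -> C_R_CompleteNormedModule) a b : ex_RInt f a b ->
  snd (RInt f a b) = RInt (fun x => snd (f x)) a b.
Proof.
  intros H. symmetry. apply is_RInt_unique.
  apply (is_RInt_fct_extend_snd (U:=R_NormedModule) (V:=R_NormedModule)).
  apply (RInt_correct (V:=C_R_CompleteNormedModule)). exact H.
Qed.

Lemma integrand_cont d k z x : 0 < x -> continuous (integrand d k z) x.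
Proof.
  intros Hx.
  change (continuous (fun y => ((d * Rpower y (d-1) * cos (2*PI*(z*y^k)),
                                 d * Rpower y (d-1) * sin (2*PI*(z*y^k))) : C_R_CompleteNormedModule)) x).
  apply continuous_pairC.
  - apply (ex_derive_continuous (fun y => d * Rpower y (d-1) * cos (2*PI*(z*y^k)))).
    auto_derive. repeat split; auto. apply Rpower_ex_derive; auto.
  - apply (ex_derive_continuous (fun y => d * Rpower y (d-1) * sin (2*PI*(z*y^k)))).
    auto_derive. repeat split; auto. apply Rpower_ex_derive; auto.
Qed.

Lemma integrand_bound d k z x : 0 < d -> Cmod (integrand d k z x) <= d * Rpower x (d-1).
Proof.
  intros Hd. unfold integrand. rewrite Cmod_scalR, Cmod_e, Rmult_1_r.
  pose proof (Rpower_pos x (d-1)). rewrite Rabs_pos_eq by nra. lra.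
Qed.

Lemma poly_exp L d kap : 0 < L -> 0 < d -> 0 < kap ->
  Rpower L (1+kap) <= exp ((1+kap)^2/d) * exp (d*L).
Proof.
  intros HL Hd Hk. rewrite Rpower_exp, <- exp_plus.
  pose proof (ln_le_2sqrt L HL).
  pose proof (sqrt_sqrt L ltac:(lra)). pose proof (sqrt_pos L).
  assert (Hq : (1+kap) * ln L <= (1+kap)^2/d + d*L).
  { assert (0 <= (d * sqrt L - (1+kap))^2) by apply pow2_ge_0.
    assert ((1+kap) * ln L <= (1+kap) * (2 * sqrt L)) by (apply Rmult_le_compat_l; lra).
    assert (2*(1+kap)*sqrt L <= (1+kap)^2/d + d*L).
    { apply Rmult_le_reg_l with d; auto.
      replace (d * ((1 + kap) ^ 2 / d + d * L)) with ((1+kap)^2 + d*d*(sqrt L * sqrt L)) by (rewrite H0; field; lra).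
      nra. }
    lra. }
  destruct (Req_dec ((1+kap) * ln L) ((1+kap)^2/d + d*L)) as [E|E].
  - rewrite E. lra.
  - left. apply exp_increasing. lra.
Qed.

Lemma fstD (a : C) (u v : C_R_CompleteNormedModule) (r : R) : fst (Cminus a (scal r (plus u v))) = fst a - r * (fst u + fst v).
Proof. destruct a, u, v. simpl. unfold plus, scal; simpl. unfold mult, plus; simpl. ring. Qed.

Lemma sndD (a : C) (u v : C_R_CompleteNormedModule) (r : R) : snd (Cminus a (scal r (plus u v))) = snd a - r * (snd u + snd v).
Proof. destruct a, u, v. simpl. unfold plus, scal; simpl. unfold mult, plus; simpl. ring. Qed.

Lemma abs_sin t : Rabs (sin t) <= 1.
Proof. pose proof (SIN_bound t). apply Rabs_le; lra. Qed.
Lemma abs_cos t : Rabs (cos t) <= 1.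
Proof. pose proof (COS_bound t). apply Rabs_le; lra. Qed.

Theorem lemma6 (k : nat) (c kappa : R) :
  (3 <= k)%nat -> 1 < c -> 0 < kappa ->
  exists C : R, 0 < C /\
  forall (N : nat) (beta : R),
    (0 < N)%nat ->
    2 < Rpower (INR N) (/ INR k) ->
    beta <> 0 ->
    let delta := / c in
    let X := Rpower (INR N) (/ INR k) in
    let L := ln X in
    Cmod (Jint delta k X beta - scal (/ L) (Iint delta k X beta))
    <= C * ( Rpower (INR N) (delta / INR k) / L ^ 2 / Rpower L kappa
           + Rmin (Rpower (INR N) (delta / INR k)) (Rpower (Rabs beta) (- (delta / INR k)))
             * ln (ln (INR N)) / L ^ 2 ).
Proof.
  intros Hk Hc Hkap.
  assert (Hd : 0 < / c < 1).
  { split. apply Rinv_0_lt_compat; lra. rewrite <- Rinv_1. apply Rinv_lt_contravar; lra. }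
  set (d := / c) in *.
  set (m := (2 + kappa) / d).
  assert (Hmd : m * d = 2 + kappa) by (unfold m; field; lra).
  assert (Hm : 2 < m).
  { unfold m. apply Rmult_lt_reg_r with d; [lra|]. unfold Rdiv. rewrite Rmult_assoc, Rinv_l by lra. nra. }
  set (A := (Rpower (16*m^2) (m*d) + 1) / ln 2).
  set (E0 := exp ((1+kappa)^2 / d)).
  assert (HA : 0 < A).
  { unfold A. apply Rdiv_lt_0_compat; [pose proof (Rpower_pos (16*m^2) (m*d)); lra | apply ln2_pos]. }
  assert (HE0 : 0 < E0) by apply exp_pos.
  exists (4*E0 + 2*A + 8*m). split; [lra|].
  intros N beta HN HX Hb delta X L.
  change (2 < X) in HX.
  assert (HkR : 3 <= INR k) by (replace 3 with (INR 3) by (simpl; ring); apply le_INR; lia).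
  assert (HN0 : 0 < INR N) by (apply lt_0_INR; lia).
  assert (HLdef : L = / INR k * ln (INR N)) by (unfold L, X; apply ln_Rpower).
  pose proof ln2_pos. pose proof ln_lt_2.
  assert (HL : ln 2 < L) by (unfold L; apply ln_increasing; lra).
  assert (HlnN : ln (INR N) = INR k * L) by (rewrite HLdef; field; lra).
  assert (HlnN1 : 1 <= ln (INR N)) by nra.
  set (lam := ln (ln (INR N))).
  assert (Hlam0 : 0 <= lam) by (unfold lam; rewrite <- ln_1; apply ln_le; lra).
  assert (Hlam : ln (ln X) <= lam).
  { change (ln (ln X)) with (ln L). unfold lam. apply ln_le; nra. }
  assert (HXd : Rpower (INR N) (delta / INR k) = Rpower X d).
  { unfold X. rewrite Rpower_mult. f_equal. unfold delta, Rdiv. ring. }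
  assert (HTd : Rpower (Rabs beta) (- (delta / INR k)) = Rpower (Rpower (Rabs beta) (- / INR k)) d).
  { rewrite Rpower_mult. f_equal. unfold delta, Rdiv. ring. }
  rewrite HXd, HTd.
  assert (HLmd : L^2 * Rpower L kappa = Rpower L (m*d)).
  { rewrite Hmd, Rpower_plus. f_equal. rewrite <- Rpower_pow by lra. f_equal. }
  set (P1 := Rpower X d / Rpower L (m*d)).
  assert (HLk : 0 < Rpower L kappa) by apply Rpower_pos.
  assert (HP1eq : Rpower X d / L^2 / Rpower L kappa = P1).
  { unfold P1. rewrite <- HLmd. field. split; lra. }
  rewrite HP1eq.
  set (Tb := Rpower (Rpower (Rabs beta) (- / INR k)) d).
  set (Mn := Rmin (Rpower X d) Tb).
  assert (HMn : 0 <= Mn).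
  { apply Rmin_glb; left; apply Rpower_pos. }
  assert (Hk1 : (k - 1 = Init.Nat.pred k)%nat) by lia.
  pose proof (real_est d k beta X (fun x => sin (2*PI*(beta*x^k))) (fun x => cos (2*PI*(beta*x^k))) m lam
    Hd Hk Hb HX Hm Hlam Hlam0) as Rc.
  pose proof (real_est d k beta X (fun x => - cos (2*PI*(beta*x^k))) (fun x => sin (2*PI*(beta*x^k))) m lam
    Hd Hk Hb HX Hm Hlam Hlam0) as Rs.
  assert (Hder1 : forall x, 0 < x -> is_derive (fun x => sin (2*PI*(beta*x^k))) x
             (2*PI*beta*INR k * x^(k-1) * cos (2*PI*(beta*x^k)))).
  { intros x Hx. auto_derive; auto. rewrite Hk1. ring. }
  assert (Hder2 : forall x, 0 < x -> is_derive (fun x => - cos (2*PI*(beta*x^k))) x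
             (2*PI*beta*INR k * x^(k-1) * sin (2*PI*(beta*x^k)))).
  { intros x Hx. auto_derive; auto. rewrite Hk1. ring. }
  assert (Hc1 : forall x, 0 < x -> continuous (fun x => cos (2*PI*(beta*x^k))) x).
  { intros x Hx. apply (ex_derive_continuous (fun x => cos (2*PI*(beta*x^k)))). auto_derive; auto. }
  assert (Hc2 : forall x, 0 < x -> continuous (fun x => sin (2*PI*(beta*x^k))) x).
  { intros x Hx. apply (ex_derive_continuous (fun x => sin (2*PI*(beta*x^k)))). auto_derive; auto. }
  specialize (Rc Hder1 Hc1 ltac:(intros; apply abs_sin) ltac:(intros; apply abs_cos)).
  specialize (Rs Hder2 Hc2 ltac:(intros; simpl; rewrite Rabs_Ropp; apply abs_cos) ltac:(intros; apply abs_sin)).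
  fold L in Rc, Rs. fold P1 Tb Mn in Rc, Rs.
  set (f := integrand d k beta).
  destruct (improper_exist f 2 d) as [l0 [Hl0 Hl0b]]; try lra.
  { intros x Hx. apply integrand_cont; lra. }
  { intros x Hx. apply integrand_bound; lra. }
  assert (Hfc : forall x, 0 < x -> continuous f x) by (intros; apply integrand_cont; auto).
  assert (HexF : ex_RInt (V:=C_R_CompleteNormedModule) f 2 X).
  { apply (ex_RInt_continuous (V:=C_R_CompleteNormedModule)). rewrite Rmin_left, Rmax_right by lra.
    intros; apply Hfc; lra. }
  assert (HexJ : ex_RInt (V:=C_R_CompleteNormedModule) (fun x => scal (/ ln x) (f x)) 2 X).
  { apply (ex_RInt_continuous (V:=C_R_CompleteNormedModule)). rewrite Rmin_left, Rmax_right by lra.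
    intros z Hz. apply (continuous_scal (fun x => / ln x) f).
    - apply (ex_derive_continuous (fun x => / ln x)). auto_derive. pose proof (ln_pos' z ltac:(lra)).
      repeat split; lra.
    - apply Hfc; lra. }
  assert (HI : Iint d k X beta = plus l0 (RInt (V:=C_R_CompleteNormedModule) f 2 X)).
  { unfold Iint. apply (is_RInt_gen_unique (V:=C_R_CompleteNormedModule)). apply (is_RInt_gen_Chasles (V:=C_R_NormedModule) _ 2); auto.
    apply is_RInt_gen_at_point. apply (RInt_correct (V:=C_R_CompleteNormedModule)); auto. }
  change (Jint delta k X beta) with (RInt (V:=C_R_CompleteNormedModule) (fun x => scal (/ ln x) (f x)) 2 X).
  change (Iint delta k X beta) with (Iint d k X beta).
  rewrite HI.
  eapply Rle_trans. apply Cmod_le_sum.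
  match goal with |- Rabs (fst (Cminus ?J (scal ?r (plus ?l ?I)))) + _ <= _ =>
    replace (fst (Cminus J (scal r (plus l I)))) with (fst J - r * (fst l + fst I))
      by (symmetry; exact (fstD J l I r));
    replace (snd (Cminus J (scal r (plus l I)))) with (snd J - r * (snd l + snd I))
      by (symmetry; exact (sndD J l I r))
  end.
  set (cJ := fun x => / ln x * (d * Rpower x (d-1) * cos (2*PI*(beta*x^k)))).
  set (cF := fun x => d * Rpower x (d-1) * cos (2*PI*(beta*x^k))).
  set (sJ := fun x => / ln x * (d * Rpower x (d-1) * sin (2*PI*(beta*x^k)))).
  set (sF := fun x => d * Rpower x (d-1) * sin (2*PI*(beta*x^k))).
  assert (HexcJ : ex_RInt cJ 2 X) by exact (ex_RInt_fct_extend_fst _ _ _ HexJ).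
  assert (HexsJ : ex_RInt sJ 2 X) by exact (ex_RInt_fct_extend_snd _ _ _ HexJ).
  assert (HexcF : ex_RInt cF 2 X) by exact (ex_RInt_fct_extend_fst _ _ _ HexF).
  assert (HexsF : ex_RInt sF 2 X) by exact (ex_RInt_fct_extend_snd _ _ _ HexF).
  assert (E1 : fst (RInt (V:=C_R_CompleteNormedModule) (fun x => scal (/ ln x) (f x)) 2 X) = RInt cJ 2 X).
  { etransitivity; [apply RInt_fst; exact HexJ|]. apply RInt_ext. intros; reflexivity. }
  assert (E2 : snd (RInt (V:=C_R_CompleteNormedModule) (fun x => scal (/ ln x) (f x)) 2 X) = RInt sJ 2 X).
  { etransitivity; [apply RInt_snd; exact HexJ|]. apply RInt_ext. intros; reflexivity. }
  assert (E3 : fst (RInt (V:=C_R_CompleteNormedModule) f 2 X) = RInt cF 2 X).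
  { etransitivity; [apply RInt_fst; exact HexF|]. apply RInt_ext. intros; reflexivity. }
  assert (E4 : snd (RInt (V:=C_R_CompleteNormedModule) f 2 X) = RInt sF 2 X).
  { etransitivity; [apply RInt_snd; exact HexF|]. apply RInt_ext. intros; reflexivity. }
  match goal with |- Rabs (fst ?J - / L * (fst l0 + fst ?I)) + Rabs (snd ?J' - / L * (snd l0 + snd ?I')) <= _ =>
    replace (fst J) with (RInt cJ 2 X) by (symmetry; exact E1);
    replace (fst I) with (RInt cF 2 X) by (symmetry; exact E3);
    replace (snd J') with (RInt sJ 2 X) by (symmetry; exact E2);
    replace (snd I') with (RInt sF 2 X) by (symmetry; exact E4)
  end.
  cbv beta in Rc, Rs. fold A in Rc, Rs.
  assert (Ec : RInt (fun x => wL d L x * cos (2*PI*(beta*x^k))) 2 X = RInt cJ 2 X - / L * RInt cF 2 X).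
  { transitivity (RInt (fun x => minus (cJ x) (scal (/L) (cF x))) 2 X).
    - apply RInt_ext. intros x Hx. unfold cJ, cF, wL, gL. unfold minus, plus, opp, scal; simpl.
      unfold mult; simpl. fold L. ring.
    - rewrite (RInt_minus (V:=R_CompleteNormedModule)); [| exact HexcJ | apply (ex_RInt_scal (V:=R_CompleteNormedModule)); exact HexcF].
      rewrite (RInt_scal (V:=R_CompleteNormedModule)) by exact HexcF. reflexivity. }
  assert (Es : RInt (fun x => wL d L x * sin (2*PI*(beta*x^k))) 2 X = RInt sJ 2 X - / L * RInt sF 2 X).
  { transitivity (RInt (fun x => minus (sJ x) (scal (/L) (sF x))) 2 X).
    - apply RInt_ext. intros x Hx. unfold sJ, sF, wL, gL. unfold minus, plus, opp, scal; simpl.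
      unfold mult; simpl. fold L. ring.
    - rewrite (RInt_minus (V:=R_CompleteNormedModule)); [| exact HexsJ | apply (ex_RInt_scal (V:=R_CompleteNormedModule)); exact HexsF].
      rewrite (RInt_scal (V:=R_CompleteNormedModule)) by exact HexsF. reflexivity. }
  rewrite Ec in Rc. rewrite Es in Rs.
  assert (Hl2 : Rpower 2 d <= 2).
  { rewrite <- (Rpower_1 2) at 2 by lra. apply Rle_Rpower; lra. }
  pose proof (Rmax_Cmod l0) as Hmx.
  assert (Hfl : Rabs (fst l0) <= 2) by (pose proof (Rmax_l (Rabs (fst l0)) (Rabs (snd l0))); lra).
  assert (Hsl : Rabs (snd l0) <= 2) by (pose proof (Rmax_r (Rabs (fst l0)) (Rabs (snd l0))); lra).
  assert (HL0 : 0 < L) by lra.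
  assert (HinvL : / L <= E0 * P1).
  { unfold P1. rewrite Hmd. replace (2 + kappa) with (1 + (1 + kappa)) by ring.
    rewrite Rpower_plus, Rpower_1 by lra.
    rewrite (Rpower_exp X d). change (ln X) with L.
    pose proof (poly_exp L d kappa HL0 ltac:(lra) Hkap) as Hpe. fold E0 in Hpe.
    pose proof (Rpower_pos L (1 + kappa)).
    apply Rmult_le_reg_r with (L * Rpower L (1 + kappa)); [nra|].
    replace (/ L * (L * Rpower L (1 + kappa))) with (Rpower L (1 + kappa)) by (field; lra).
    replace (E0 * (exp (d * L) / (L * Rpower L (1 + kappa))) * (L * Rpower L (1 + kappa)))
      with (E0 * exp (d * L)) by (field; lra). exact Hpe. }
  set (a1 := RInt cJ 2 X) in *. set (b1 := RInt cF 2 X) in *.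
  set (a2 := RInt sJ 2 X) in *. set (b2 := RInt sF 2 X) in *.
  assert (T1 : Rabs (a1 - / L * (fst l0 + b1)) <= Rabs (a1 - / L * b1) + / L * 2).
  { replace (a1 - / L * (fst l0 + b1)) with ((a1 - / L * b1) + (- / L * fst l0)) by ring.
    eapply Rle_trans. apply Rabs_triang. apply Rplus_le_compat_l.
    rewrite Rabs_mult, Rabs_Ropp, Rabs_inv, Rabs_pos_eq by lra.
    assert (0 < / L) by (apply Rinv_0_lt_compat; lra). nra. }
  assert (T2 : Rabs (a2 - / L * (snd l0 + b2)) <= Rabs (a2 - / L * b2) + / L * 2).
  { replace (a2 - / L * (snd l0 + b2)) with ((a2 - / L * b2) + (- / L * snd l0)) by ring.
    eapply Rle_trans. apply Rabs_triang. apply Rplus_le_compat_l.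
    rewrite Rabs_mult, Rabs_Ropp, Rabs_inv, Rabs_pos_eq by lra.
    assert (0 < / L) by (apply Rinv_0_lt_compat; lra). nra. }
  set (Q := Mn * lam / L ^ 2) in *.
  assert (HQ : 4 * m * Mn * lam / L ^ 2 = 4 * m * Q) by (unfold Q, Rdiv; ring).
  rewrite HQ in Rc, Rs.
  assert (HQ0 : 0 <= Q).
  { unfold Q. apply Rmult_le_pos; [nra|]. left. apply Rinv_0_lt_compat. nra. }
  assert (HP10 : 0 < P1) by (unfold P1; apply Rdiv_lt_0_compat; apply Rpower_pos).
  nra.
Qed.
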